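(* Let $G$ be a bipartite edge-magic simple graph with stable sets $X$ and $Y$, suppose $G\cong H_1\oplus H_2$ is a decomposition of $G$, and let $n\ge1$. Then $|\tau_{S_{2n}(G;H_1,H_2)}|\ge (n+1)|\tau_G|+2$.
   Context: For a $(p,q)$-graph $G$ ($p$ vertices, $q$ edges), an edge-magic labeling is a bijection $f:V(G)\cup E(G)\to[1,p+q]$ such that $f(x)+f(xy)+f(y)$ equals a constant (the valence) for every edge $xy$. For a graph $H$, $\tau_H$ is the set of integers that are valences of edge-magic labelings of $H$. A decomposition $G\cong H_1\oplus H_2$ means $H_1,H_2$ are subgraphs of $G$ whose edge sets partition $E(G)$. Writing $X=\{x_i\}_{i=1}^s$, $Y=\{y_j\}_{j=1}^t$, $S_{2n}(G;H_1,H_2)$ is the graph with vertex set $X\cup Y\cup\bigcup_{k=1}^n X_k\cup\bigcup_{k=1}^n Y_k$, where $X_k=\{x_i^k\}_{i=1}^s$, $Y_k=\{y_j^k\}_{j=1}^t$ are new vertices, and edge set $E(G)\cup\{x_iy_j^k: x_iy_j\in E(H_1),\,k\in[1,n]\}\cup\{x_i^ky_j: x_iy_j\in E(H_2),\,k\in[1,n]\}$. *)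

(* Defs.v *)
From Stdlib Require Import ClassicalEpsilon.
From HB Require Import structures.
From mathcomp Require Import all_boot.
Set Implicit Arguments. Unset Strict Implicit. Unset Printing Implicit Defensive.

Definition asbool (P : Prop) : bool :=
  if excluded_middle_informative P then true else false.

Definition simple_graph (V : finType) (adj : rel V) : Prop :=
  symmetric adj /\ irreflexive adj.

Definition edges (V : finType) (adj : rel V) : {set {set V}} :=
  [set A : {set V} | [exists x, [exists y, adj x y && (A == [set x; y])]]].

Definition elt (V : finType) (adj : rel V) : Type :=
  (V + {A : {set V} | A \in edges adj})%type.

Definition edge_magic_labeling (V : finType) (adj : rel V)
    (f : elt adj -> nat) (k : nat) : Prop :=
  let p := #|V| in let q := #|edges adj| in
  [/\ injective f,
      (forall z, 1 <= f z <= p + q),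
      (forall m, 1 <= m <= p + q -> exists z, f z = m) &
      (forall (A : {set V}) (hA : A \in edges adj) (x y : V),
          adj x y -> A = [set x; y] ->
          f (inl x) + f (inr (exist _ A hA)) + f (inl y) = k)].

Definition edge_magic (V : finType) (adj : rel V) : Prop :=
  exists f k, @edge_magic_labeling V adj f k.

(* tau_G : the set of valences.  Every valence lies in [3, 3(p+q)], so it is
   represented as a finite set of 'I_(3(p+q)+1). *)
Definition tau (V : finType) (adj : rel V) : {set 'I_(3 * (#|V| + #|edges adj|)).+1} :=
  [set k | asbool (exists f, @edge_magic_labeling V adj f (nat_of_ord k))].

(* The graph S_{2n}(G;H1,H2).  Vertex set V + V * 'I_n, where inr (v,k)
   stands for the copy v^{k+1} (so X_k, Y_k are the copies of X, Y). *)
Definition S2n_adj (V : finType) (n : nat) (adj h1 h2 : rel V) (X Y : {set V})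
    : rel (V + V * 'I_n)%type :=
  fun a b =>
    match a, b with
    | inl u, inl v => adj u v
    | inl u, inr (v, _) =>
        ((u \in X) && (v \in Y) && h1 u v) || ((v \in X) && (u \in Y) && h2 v u)
    | inr (u, _), inl v =>
        ((v \in X) && (u \in Y) && h1 v u) || ((u \in X) && (v \in Y) && h2 u v)
    | inr _, inr _ => false
    end.

(* Main.v *)
Require Import Defs.
From HB Require Import structures.
From mathcomp Require Import all_boot.
From mathcomp Require Import zify.
From Stdlib Require Import Lia ClassicalEpsilon.

Set Implicit Arguments. Unset Strict Implicit. Unset Printing Implicit Defensive.

Lemma asboolP (P : Prop) : asbool P = true <-> P.
Proof. by rewrite /asbool; case: excluded_middle_informative. Qed.

Lemma card_from_bij (T : finType) (F : T -> nat) (M : nat) :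
  injective F -> (forall z, 0 < F z <= M) ->
  (forall t, 0 < t <= M -> exists z, F z = t) -> #|T| = M.
Proof.
move=> Finj FR Fs.
have U : uniq (map F (enum T)) by rewrite map_inj_uniq ?enum_uniq.
have E : map F (enum T) =i iota 1 M.
  move=> t; rewrite mem_iota; apply/mapP/idP.
    by case=> z _ ->; have := FR z; lia.
  move=> h; have [z Hz] : exists z, F z = t by apply: Fs; lia.
  by exists z; rewrite ?mem_enum.
have := uniq_perm U (iota_uniq 1 M) E => /perm_size.
by rewrite size_map size_iota cardE.
Qed.

Lemma surj_from_card (T : finType) (F : T -> nat) (M : nat) :
  injective F -> (forall z, 0 < F z <= M) -> #|T| = M ->
  (forall t, 0 < t <= M -> exists z, F z = t).
Proof.
move=> Finj FR cT t Ht.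
have U : uniq (map F (enum T)) by rewrite map_inj_uniq ?enum_uniq.
have S : {subset map F (enum T) <= iota 1 M}.
  by move=> u /mapP [z _ ->]; rewrite mem_iota; have := FR z; lia.
have SZ : size (iota 1 M) <= size (map F (enum T)).
  by rewrite size_map size_iota -cardE cT.
have [_ E] := uniq_min_size U S SZ.
have : t \in iota 1 M by rewrite mem_iota; lia.
by rewrite -E => /mapP [z _ ->]; exists z.
Qed.

Lemma divmod_uniq (d x o x' o' : nat) : o < d -> o' < d ->
  d * x + o = d * x' + o' -> x = x' /\ o = o'.
Proof.
move=> ho ho' E.
have h1 : (d * x + o) %/ d = x by rewrite mulnC divnMDl ?divn_small ?addn0 //; lia.
have h2 : (d * x + o) %% d = o by rewrite mulnC modnMDl modn_small.
have h3 : (d * x' + o') %/ d = x' by rewrite mulnC divnMDl ?divn_small ?addn0 //; lia.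
have h4 : (d * x' + o') %% d = o' by rewrite mulnC modnMDl modn_small.
by split; [rewrite -h1 -h3 E | rewrite -h2 -h4 E].
Qed.

Lemma edgesP (V : finType) (adj : rel V) (A : {set V}) :
  A \in edges adj -> exists x y, adj x y /\ A = [set x; y].
Proof.
by rewrite inE => /existsP [x /existsP [y /andP [h /eqP ->]]]; exists x, y.
Qed.

Lemma edge_in (V : finType) (adj : rel V) x y : adj x y -> [set x; y] \in edges adj.
Proof. by move=> h; rewrite inE; apply/existsP; exists x; apply/existsP; exists y; rewrite h eqxx. Qed.

Definition NN (V : finType) (adj : rel V) := #|V| + #|edges adj|.

Definition eE (V : finType) (adj : rel V) (A : {set V}) (hA : A \in edges adj) : elt adj :=
  inr (exist (fun B => B \in edges adj) A hA).

Lemma labE (V : finType) (adj : rel V) (f : elt adj -> nat) k :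
  edge_magic_labeling f k <->
  [/\ injective f,
      (forall z, 0 < f z <= NN adj),
      (forall m, 0 < m <= NN adj -> exists z, f z = m) &
      (forall (A : {set V}) (hA : A \in edges adj) (x y : V),
          adj x y -> A = [set x; y] ->
          f (inl x) + f (eE hA) + f (inl y) = k)].
Proof. by []. Qed.

Lemma lab_dual (V : finType) (adj : rel V) (f : elt adj -> nat) k :
  edge_magic_labeling f k ->
  edge_magic_labeling (fun z : elt adj => (NN adj).+1 - f z)
     (3 * (NN adj).+1 - k).
Proof.
move/labE=> [fI fR fS fV]; apply/labE; split.
- move=> z z' /= E; apply: fI; have := fR z; have := fR z'; lia.
- move=> z /=; have := fR z; lia.
- move=> t Ht.
  have Ht' : 1 <= (NN adj).+1 - t <= NN adj by lia.
  have [z Hz] := fS _ Ht'.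
  exists z; have := fR z; lia.
- move=> A hA x y hxy E; have := fV A hA x y hxy E.
  have := fR (inl x); have := fR (inl y); have := fR (eE hA); lia.
Qed.

Lemma edge_bounds (V : finType) (adj : rel V) (f : elt adj -> nat) k x y (hA : [set x; y] \in edges adj) :
  irreflexive adj -> edge_magic_labeling f k -> adj x y ->
  [/\ f (inl x) + 3 <= k, f (eE hA) + 3 <= k, f (inl y) + 3 <= k & 6 <= k].
Proof.
move=> irr /labE [fI fR _ fV] hxy.
have := fV _ hA x y hxy erefl.
have nxy : x != y by apply: contraTneq hxy => ->; rewrite irr.
have d1 : f (inl x) <> f (inl y) by move=> /fI [] /eqP; rewrite (negPf nxy).
have d2 : f (inl x) <> f (eE hA) by move=> /fI.
have d3 : f (inl y) <> f (eE hA) by move=> /fI.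
have := fR (inl x); have := fR (inl y); have := fR (eE hA); move=> *; split; lia.
Qed.

Lemma val_bounds (V : finType) (adj : rel V) (f : elt adj -> nat) k :
  irreflexive adj -> edge_magic_labeling f k -> 0 < #|edges adj| ->
  6 <= k <= 3 * (NN adj).
Proof.
move=> irr hf; rewrite card_gt0 => /set0Pn [A hA].
have [x [y [hxy EA]]] := edgesP hA.
move: hA; rewrite EA => hA.
have [b1 b2 b3 b4] := edge_bounds hA irr hf hxy.
case/labE: hf => fI fR _ fV; have := fV _ hA x y hxy erefl.
have := fR (inl x); have := fR (inl y); have := fR (eE hA); lia.
Qed.

Lemma in_tau (V : finType) (adj : rel V) (f : elt adj -> nat) k :
  edge_magic_labeling f k -> k <= 3 * (NN adj) ->
  (inord k : 'I_(3 * (NN adj)).+1) \in tau adj.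
Proof.
move=> hf hk; rewrite inE; apply/asboolP; exists f; rewrite inordK //.
Qed.

Lemma tau_lab (V : finType) (adj : rel V) (i : 'I_(3 * (NN adj)).+1) :
  i \in tau adj -> exists f : elt adj -> nat, edge_magic_labeling f i.
Proof. by rewrite inE => /asboolP. Qed.

Definition pv (V : finType) (n : nat) (w : (V + V * 'I_n)%type) : V :=
  match w with inl v => v | inr (v, _) => v end.
Definition pc (V : finType) (n : nat) (w : (V + V * 'I_n)%type) : nat :=
  match w with inl _ => 0 | inr (_, i) => (nat_of_ord i).+1 end.
Definition cp (V : finType) (n : nat) (v : V) (j : nat) : (V + V * 'I_n)%type :=
  if j is j'.+1 then (if (insub j' : option 'I_n) is Some i then inr (v, i) else inl v)
  else inl v.

Lemma pc_le (V : finType) (n : nat) (w : (V + V * 'I_n)%type) : pc w <= n.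
Proof. by case: w => [//|[v i]] /=; rewrite ltn_ord. Qed.

Lemma cp_pv (V : finType) (n : nat) (w : (V + V * 'I_n)%type) : cp n (pv w) (pc w) = w.
Proof. by case: w => [//|[v i]] /=; rewrite valK. Qed.

Lemma pv_cp (V : finType) (n : nat) (v : V) j : pv (cp n v j) = v.
Proof. by case: j => [//|j] /=; case: insubP. Qed.

Lemma pc_cp (V : finType) (n : nat) (v : V) j : j <= n -> pc (cp n v j) = j.
Proof. by case: j => [//|j] /= hj; rewrite insubT. Qed.

Lemma cp_inr (V : finType) (n : nat) (v : V) j : 0 < j <= n ->
  exists i, cp n v j = inr (v, i).
Proof. by case: j => [//|j] /= hj; rewrite insubT; eexists. Qed.

Lemma w_eq (V : finType) (n : nat) (w w' : (V + V * 'I_n)%type) :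
  pv w = pv w' -> pc w = pc w' -> w = w'.
Proof. by move=> e1 e2; rewrite -(cp_pv w) -(cp_pv w') e1 e2. Qed.

Lemma pc0 (V : finType) (n : nat) (w : (V + V * 'I_n)%type) : pc w = 0 -> w = inl (pv w).
Proof. by case: w => [//|[v i]]. Qed.

Lemma pcS (V : finType) (n : nat) (w : (V + V * 'I_n)%type) : 0 < pc w ->
  exists i, w = inr (pv w, i).
Proof. by case: w => [//|[v i]] _; exists i. Qed.

Lemma adjS_sym (V : finType) (n : nat) (adj h1 h2 : rel V) (X Y : {set V}) :
  symmetric adj -> symmetric (S2n_adj (n:=n) adj h1 h2 X Y).
Proof. by move=> sa [u|[u i]] [v|[v j]] //=; rewrite sa. Qed.

Lemma adjS_G (V : finType) (n : nat) (adj h1 h2 : rel V) (X Y : {set V}) a b :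
  symmetric adj -> (forall x y, adj x y = h1 x y || h2 x y) ->
  S2n_adj (n:=n) adj h1 h2 X Y a b -> adj (pv a) (pv b).
Proof.
move=> sa dec; case: a => [u|[u i]]; case: b => [v|[v j]] //=.
- by case/orP => /andP [_ h]; [rewrite dec h | rewrite sa dec h orbT].
- by case/orP => /andP [_ h]; [rewrite sa dec h | rewrite dec h orbT].
Qed.

Lemma adjS_pc (V : finType) (n : nat) (adj h1 h2 : rel V) (X Y : {set V}) a b :
  S2n_adj (n:=n) adj h1 h2 X Y a b -> pc a = 0 \/ pc b = 0.
Proof. by case: a => [u|[u i]]; case: b => [v|[v j]] //= _; [left|left|right]. Qed.

Lemma adjS_cross (V : finType) (n : nat) (adj h1 h2 : rel V) (X Y : {set V}) u v i i' :
  [disjoint X & Y] -> (forall x y, ~~ (h1 x y && h2 x y)) ->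
  S2n_adj (n:=n) adj h1 h2 X Y (inl u) (inr (v, i)) ->
  S2n_adj (n:=n) adj h1 h2 X Y (inr (u, i')) (inl v) -> False.
Proof.
move=> dXY ex /=.
have nXY z : z \in X -> z \in Y -> False.
  by move=> hX hY; move: (disjointFr dXY hX); rewrite hY.
case/orP => /andP [/andP [a1 a2] a3]; case/orP => /andP [/andP [b1 b2] b3].
- exact: (nXY u).
- by move: (ex u v); rewrite a3 b3.
- by move: (ex v u); rewrite a3 b3.
- exact: (nXY v).
Qed.

Lemma set2_eq (T : finType) (a b c d : T) : a != b -> [set a; b] = [set c; d] ->
  (a = c /\ b = d) \/ (a = d /\ b = c).
Proof.
move=> nab E.
have ha : a \in [set c; d] by rewrite -E !inE eqxx.
have hb : b \in [set c; d] by rewrite -E !inE eqxx orbT.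
have hc : c \in [set a; b] by rewrite E !inE eqxx.
move: ha hb hc; rewrite !inE => /orP [] /eqP ea /orP [] /eqP eb.
- by move: nab; rewrite ea eb eqxx.
- by left.
- by right.
- by move: nab; rewrite ea eb eqxx.
Qed.

Record Hyp (V : finType) (adj h1 h2 : rel V) (X Y : {set V}) : Prop := {
  hy_sym : symmetric adj;
  hy_irr : irreflexive adj;
  hy_dis : [disjoint X & Y];
  hy_bip : forall x y, adj x y -> (x \in X) && (y \in Y) || (x \in Y) && (y \in X);
  hy_s1 : symmetric h1;
  hy_s2 : symmetric h2;
  hy_dec : forall x y, adj x y = h1 x y || h2 x y;
  hy_ex : forall x y, ~~ (h1 x y && h2 x y) }.

Definition ccE (V : finType) (n : nat) (A : {set (V + V * 'I_n)%type}) : nat :=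
  \sum_(w in A) pc w.
Definition pE (V : finType) (n : nat) (A : {set (V + V * 'I_n)%type}) : {set V} :=
  [set pv w | w in A].

Lemma ccE2 (V : finType) (n : nat) (a b : (V + V * 'I_n)%type) : a != b ->
  ccE [set a; b] = pc a + pc b.
Proof. by move=> nab; rewrite /ccE big_setU1 ?inE //= big_set1. Qed.

Lemma pE2 (V : finType) (n : nat) (a b : (V + V * 'I_n)%type) :
  pE [set a; b] = [set pv a; pv b].
Proof. by rewrite /pE imsetU1 imset_set1. Qed.

Lemma adjS_neq (V : finType) (n : nat) (adj h1 h2 : rel V) (X Y : {set V}) a b :
  Hyp adj h1 h2 X Y -> S2n_adj (n:=n) adj h1 h2 X Y a b -> pv a != pv b.
Proof.
move=> H hab; have := adjS_G (hy_sym H) (hy_dec H) hab.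
by apply: contraTneq => ->; rewrite (hy_irr H).
Qed.

Lemma adjS_neq' (V : finType) (n : nat) (adj h1 h2 : rel V) (X Y : {set V}) a b :
  Hyp adj h1 h2 X Y -> S2n_adj (n:=n) adj h1 h2 X Y a b -> a != b.
Proof. by move=> H hab; apply: contraNneq (adjS_neq H hab) => ->. Qed.

Lemma Sedge_aligned (V : finType) (n : nat) (adj h1 h2 : rel V) (X Y : {set V}) a b a' b' :
  Hyp adj h1 h2 X Y ->
  S2n_adj (n:=n) adj h1 h2 X Y a b -> S2n_adj (n:=n) adj h1 h2 X Y a' b' ->
  pv a = pv a' -> pv b = pv b' -> pc a + pc b = pc a' + pc b' -> a = a' /\ b = b'.
Proof.
move=> H hab hab' ea eb es.
have cross u v i i' : S2n_adj (n:=n) adj h1 h2 X Y (inl u) (inr (v, i)) ->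
    S2n_adj (n:=n) adj h1 h2 X Y (inr (u, i')) (inl v) -> False.
  exact: adjS_cross (hy_dis H) (hy_ex H).
case: (adjS_pc hab) => p1; case: (adjS_pc hab') => p2.
- by split; apply: w_eq => //; lia.
- case: (posnP (pc b)) => pb.
    by split; apply: w_eq => //; lia.
  have [i Hb] := pcS pb; have [i' Ha'] : exists i', a' = inr (pv a', i').
    by apply: pcS; lia.
  move: hab hab'; rewrite (pc0 p1) (pc0 p2) Hb Ha' -ea -eb => h h'.
  by case: (cross _ _ _ _ h h').
- case: (posnP (pc a)) => pa.
    by split; apply: w_eq => //; lia.
  have [i Ha] := pcS pa; have [i' Hb'] : exists i', b' = inr (pv b', i').
    by apply: pcS; lia.
  move: hab hab'; rewrite (pc0 p1) (pc0 p2) Ha Hb' -ea -eb => h h'.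
  by case: (cross _ _ _ _ h' h).
- by split; apply: w_eq => //; lia.
Qed.

Lemma Sedge_inj (V : finType) (n : nat) (adj h1 h2 : rel V) (X Y : {set V}) a b a' b' :
  Hyp adj h1 h2 X Y ->
  S2n_adj (n:=n) adj h1 h2 X Y a b -> S2n_adj (n:=n) adj h1 h2 X Y a' b' ->
  [set pv a; pv b] = [set pv a'; pv b'] -> pc a + pc b = pc a' + pc b' ->
  [set a; b] = [set a'; b'].
Proof.
move=> H hab hab' E es.
case: (set2_eq (adjS_neq H hab) E) => [[e1 e2]|[e1 e2]].
  by have [-> ->] := Sedge_aligned H hab hab' e1 e2 es.
have hba' := hab'; rewrite adjS_sym in hba'; last exact: (hy_sym H).
have [-> ->] := Sedge_aligned H hab hba' e1 e2 ltac:(lia).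
by rewrite setUC.
Qed.

Lemma Sedge_surj (V : finType) (n : nat) (adj h1 h2 : rel V) (X Y : {set V}) x y j :
  Hyp adj h1 h2 X Y -> adj x y -> j <= n ->
  exists a b, [/\ S2n_adj (n:=n) adj h1 h2 X Y a b, pv a = x, pv b = y & pc a + pc b = j].
Proof.
move=> H hxy hj.
case: (posnP j) => [->|jp].
  by exists (inl x), (inl y).
have [iy Ey] := cp_inr (n:=n) y (j:=j) ltac:(lia).
have [ix Ex] := cp_inr (n:=n) x (j:=j) ltac:(lia).
have hd := hy_dec H x y; rewrite hxy in hd.
case/orP: (hy_bip H hxy) => /andP [hx hy].
- case/orP: (esym hd) => hh.
  + exists (inl x), (cp n y j); rewrite pv_cp pc_cp // Ey /= hx hy hh; split => //.
  + exists (cp n x j), (inl y); rewrite pv_cp pc_cp // Ex /= hx hy hh orbT; split => //; lia.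
- case/orP: (esym hd) => hh.
  + exists (cp n x j), (inl y); rewrite pv_cp pc_cp // Ex /= hx hy (hy_s1 H) hh; split => //; lia.
  + exists (inl x), (cp n y j); rewrite pv_cp pc_cp // Ey /= hx hy (hy_s2 H) hh orbT; split => //.
Qed.

Definition fE (V : finType) (adj : rel V) (f : elt adj -> nat) (B : {set V}) : nat :=
  match (insub B : option {A : {set V} | A \in edges adj}) with
  | Some e => f (inr e) | None => 0 end.

Lemma fE_eE (V : finType) (adj : rel V) (f : elt adj -> nat) (B : {set V}) (hB : B \in edges adj) :
  fE f B = f (eE hB).
Proof. by rewrite /fE insubT. Qed.

Lemma Sedge_info (V : finType) (n : nat) (adj h1 h2 : rel V) (X Y : {set V})
  (A : {set (V + V * 'I_n)%type}) :
  Hyp adj h1 h2 X Y -> A \in edges (S2n_adj (n:=n) adj h1 h2 X Y) ->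
  exists a b, exists hB : [set pv a; pv b] \in edges adj,
  [/\ S2n_adj (n:=n) adj h1 h2 X Y a b, A = [set a; b], pE A = [set pv a; pv b],
      ccE A = pc a + pc b & (pc a = 0 \/ pc b = 0)] /\ adj (pv a) (pv b).
Proof.
move=> H /edgesP [a [b [hab ->]]].
have hG := adjS_G (hy_sym H) (hy_dec H) hab.
exists a, b, (edge_in hG); split => //; split => //.
- exact: pE2.
- exact/ccE2/(adjS_neq' H hab).
- exact: adjS_pc hab.
Qed.

Definition FS (V : finType) (n : nat) (adj h1 h2 : rel V) (X Y : {set V})
  (f : elt adj -> nat) (hv he : nat -> nat -> nat)
  (z : elt (S2n_adj (n:=n) adj h1 h2 X Y)) : nat :=
  match z with
  | inl w => hv (f (inl (pv w))) (pc w)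
  | inr e => he (fE f (pE (val e))) (ccE (val e))
  end.
Arguments FS : clear implicits.

Record scheme (N k n : nat) (hv he : nat -> nat -> nat) (K : nat) : Prop := {
  sc_vR : forall L j, 0 < L <= N -> j <= n -> 0 < hv L j <= n.+1 * N;
  sc_eR : forall L j, 0 < L <= N -> L + 3 <= k -> j <= n -> 0 < he L j <= n.+1 * N;
  sc_vI : forall L j L' j', 0 < L <= N -> j <= n -> 0 < L' <= N -> j' <= n ->
            hv L j = hv L' j' -> L = L' /\ j = j';
  sc_eI : forall L j L' j', 0 < L <= N -> L + 3 <= k -> j <= n ->
            0 < L' <= N -> L' + 3 <= k -> j' <= n ->
            he L j = he L' j' -> L = L' /\ j = j';
  sc_veI : forall L j L' j', 0 < L <= N -> j <= n -> 0 < L' <= N -> L' + 3 <= k -> j' <= n ->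
            hv L j = he L' j' -> L = L';
  sc_val : forall L1 L2 L3 j1 j2, 0 < L1 <= N -> L1 + 3 <= k -> 0 < L2 <= N -> L2 + 3 <= k ->
            0 < L3 <= N -> L3 + 3 <= k -> L1 + L2 + L3 = k -> j1 + j2 <= n ->
            (j1 = 0 \/ j2 = 0) -> hv L1 j1 + he L2 (j1 + j2) + hv L3 j2 = K }.

Lemma FS_props (V : finType) (n : nat) (adj h1 h2 : rel V) (X Y : {set V})
  (f : elt adj -> nat) k (hv he : nat -> nat -> nat) K :
  Hyp adj h1 h2 X Y -> edge_magic_labeling f k -> scheme (NN adj) k n hv he K ->
  [/\ injective (FS _ n adj h1 h2 X Y f hv he),
      (forall z, 0 < FS _ n adj h1 h2 X Y f hv he z <= n.+1 * NN adj) &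
      (forall A (hA : A \in edges (S2n_adj (n:=n) adj h1 h2 X Y)) x y,
         S2n_adj (n:=n) adj h1 h2 X Y x y -> A = [set x; y] ->
         FS _ n adj h1 h2 X Y f hv he (inl x) + FS _ n adj h1 h2 X Y f hv he (eE hA) + FS _ n adj h1 h2 X Y f hv he (inl y) = K)].
Proof.
move=> H hf [vR eR vI eI veI sval].
have irr := hy_irr H.
have [fI fR fS fV] := (iffLR (labE f k)) hf.
have einfo : forall e : {A | A \in edges (S2n_adj (n:=n) adj h1 h2 X Y)},
    exists a b, exists hB : [set pv a; pv b] \in edges adj,
    [/\ S2n_adj (n:=n) adj h1 h2 X Y a b, val e = [set a; b],
        FS _ n adj h1 h2 X Y f hv he (inr e) = he (f (eE hB)) (pc a + pc b),
        0 < f (eE hB) <= NN adj & f (eE hB) + 3 <= k] /\ pc a + pc b <= n.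
  move=> [A hA] /=.
  have [a [b [hB [[hab EA EpE EcE p0] hG]]]] := Sedge_info H hA.
  exists a, b, hB; split; last by have := pc_le a; have := pc_le b; lia.
  have [_ b2 _ _] := edge_bounds hB irr hf hG.
  split => //; first by rewrite /FS /= EpE EcE fE_eE.
split.
- move=> [w|e] [w'|e'] /= E.
  + have [e1 e2] := vI _ _ _ _ (fR _) (pc_le w) (fR _) (pc_le w') E.
    by congr inl; apply: w_eq => //; have := fI _ _ e1; case.
  + have [a' [b' [hB' [[hab' Ee' EF' r1' r2'] hj']]]] := einfo e'.
    rewrite -/(FS _ n adj h1 h2 X Y f hv he (inr e')) EF' in E.
    have := veI _ _ _ _ (fR _) (pc_le w) r1' r2' hj' E => /fI; discriminate.
  + have [a [b [hB [[hab Ee EF r1 r2] hj]]]] := einfo e.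
    rewrite -/(FS _ n adj h1 h2 X Y f hv he (inr e)) EF in E.
    have := veI _ _ _ _ (fR _) (pc_le w') r1 r2 hj (esym E) => /fI; discriminate.
  + have [a [b [hB [[hab Ee EF r1 r2] hj]]]] := einfo e.
    have [a' [b' [hB' [[hab' Ee' EF' r1' r2'] hj']]]] := einfo e'.
    rewrite -/(FS _ n adj h1 h2 X Y f hv he (inr e)) -/(FS _ n adj h1 h2 X Y f hv he (inr e')) EF EF' in E.
    have [E1 E2] := eI _ _ _ _ r1 r2 hj r1' r2' hj' E.
    have E3 : [set pv a; pv b] = [set pv a'; pv b'].
      by have := fI _ _ E1; case.
    congr inr; apply: val_inj; rewrite Ee Ee'.
    exact: Sedge_inj H hab hab' E3 E2.
- move=> [w|e] /=.
  + exact: vR (fR _) (pc_le w).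
  + have [a [b [hB [[hab Ee EF r1 r2] hj]]]] := einfo e.
    rewrite -/(FS _ n adj h1 h2 X Y f hv he (inr e)) EF; exact: eR.
- move=> A hA x y hxy EA.
  have [a [b [hB [[hab Ee EF r1 r2] hj]]]] := einfo (exist _ A hA).
  rewrite /eE EF /=.
  have hG := adjS_G (hy_sym H) (hy_dec H) hxy.
  have hB2 := edge_in hG.
  have E2 : [set x; y] = [set a; b] by rewrite -EA -Ee.
  have [b1 b2 b3 _] := edge_bounds hB2 irr hf hG.
  have gv := fV _ hB2 _ _ hG erefl.
  have px := adjS_pc hxy.
  have ccxy : pc x + pc y = pc a + pc b.
    have := congr1 (@ccE V n) E2; rewrite !ccE2 //; [exact: adjS_neq' H hab|exact: adjS_neq' H hxy].
  have fe : f (eE hB) = f (eE hB2).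
    congr f; rewrite /eE; congr inr; apply: val_inj => /=.
    by rewrite -!pE2 E2.
  rewrite fe -ccxy.
  apply: sval => //; try exact: fR.
  have := pc_le x; have := pc_le y; lia.
Qed.

Lemma divmod2 (d x o x' o' : nat) : d * x + o = d * x' + o' -> o < d -> o' < d -> x = x' /\ o = o'.
Proof. by move=> E h h'; apply: divmod_uniq h h' E. Qed.

Definition sg (n a j : nat) := (j + a) %% n.+1.

Lemma sigma_inj n a j j' : j <= n -> j' <= n ->
  sg n a j = sg n a j' -> j = j'.
Proof.
move=> hj hj' /eqP; rewrite /sg eqn_modDr !modn_small ?ltnS // => /eqP //.
Qed.


Definition hvB (n a L j : nat) := n.+1 * L.-1 + sg n a j + 1.
Definition heB (n a L j : nat) := n.+1 * L.-1 + (n - sg n a j) + 1.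

Lemma block_scheme N k n a : a <= n -> 6 <= k ->
  scheme N k n (hvB n a) (heB n a) (n.+1 * (k - 3) + 3 + n + a).
Proof.
move=> han hk.
have sl j : sg n a j < n.+1 by rewrite /sg ltn_pmod.
have sI j j' : j <= n -> j' <= n -> sg n a j = sg n a j' -> j = j'.
  exact: sigma_inj.
split.
- move=> L j hL hj; rewrite /hvB; have := sl j; nia.
- move=> L j hL _ hj; rewrite /heB; have := sl j; nia.
- move=> L j L' j' hL hj hL' hj'; rewrite /hvB => E.
  have := sl j; have := sl j' => s' s.
  have E' : n.+1 * L.-1 + sg n a j = n.+1 * L'.-1 + sg n a j' by lia.
  have [e1 e2] := divmod_uniq s s' E'.
  split; first lia.
  exact: (sI _ _ hj hj' e2).
- move=> L j L' j' hL _ hj hL' _ hj'; rewrite /heB => E.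
  have := sl j; have := sl j' => s' s.
  have E' : n.+1 * L.-1 + (n - sg n a j) = n.+1 * L'.-1 + (n - sg n a j') by lia.
  have o1 : n - sg n a j < n.+1 by lia.
  have o2 : n - sg n a j' < n.+1 by lia.
  have [e1 e2] := divmod_uniq o1 o2 E'.
  split; first lia.
  apply: (sI _ _ hj hj'); lia.
- move=> L j L' j' hL hj hL' _ hj'; rewrite /hvB /heB => E.
  have := sl j; have := sl j' => s' s.
  have E' : n.+1 * L.-1 + sg n a j = n.+1 * L'.-1 + (n - sg n a j') by lia.
  have o2 : n - sg n a j' < n.+1 by lia.
  have [e1 e2] := divmod_uniq s o2 E'.
  lia.
- move=> L1 L2 L3 j1 j2 h1 _ h2 _ h3 _ hs hj hz.
  rewrite /hvB /heB.
  have E : n.+1 * L1.-1 + n.+1 * L2.-1 + n.+1 * L3.-1 = n.+1 * (k - 3) by nia.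
  have a0 : sg n a 0 = a by rewrite /sg modn_small.
  case: hz => ->; rewrite ?addn0 ?add0n a0 in E *.
  + have := sl j2; lia.
  + have := sl j1; lia.
Qed.

Definition hvL (m n L j : nat) :=
  if L <= m then L + m * j else m * n.+1 + n.+1 * (L - m - 1) + j + 1.
Definition heL (m n L j : nat) := L + m * (n - j).

Lemma low_scheme N k n : 6 <= k -> 0 < N ->
  scheme N k n (hvL (minn (k - 3) N) n) (heL (minn (k - 3) N) n)
     (k + minn (k - 3) N * n).
Proof.
move=> hk hN.
set m := minn (k - 3) N.
have m0 : 0 < m by rewrite /m; lia.
have mk : m <= k - 3 by rewrite /m; lia.
have mN : m <= N by rewrite /m; lia.
have mL L : L <= N -> L + 3 <= k -> L <= m by rewrite /m; lia.
clearbody m.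
have lowb L j : 0 < L <= m -> j <= n -> L + m * j <= m * n.+1 by nia.
have highb L j : m < L -> m * n.+1 < m * n.+1 + n.+1 * (L - m - 1) + j + 1 by nia.
split.
- move=> L j hL hj; rewrite /hvL; case: ifP => hLm.
  + have := lowb L j ltac:(lia) hj; nia.
  + nia.
- move=> L j hL hLk hj; rewrite /heL; have := mL L ltac:(lia) hLk; nia.
- move=> L j L' j' hL hj hL' hj'; rewrite /hvL.
  case: ifP => h1; case: ifP => h2 E.
  + have E' : m * j + L.-1 = m * j' + L'.-1 by lia.
    have [e1 e2] := divmod2 E' ltac:(lia) ltac:(lia); split; lia.
  + have := lowb L j ltac:(lia) hj; have := highb L' j' ltac:(lia); lia.
  + have := lowb L' j' ltac:(lia) hj'; have := highb L j ltac:(lia); lia.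
  + have E' : n.+1 * (L - m - 1) + j = n.+1 * (L' - m - 1) + j' by lia.
    have [e1 e2] := divmod2 E' ltac:(lia) ltac:(lia); split; lia.
- move=> L j L' j' hL hLk hj hL' hLk' hj'; rewrite /heL => E.
  have := mL L ltac:(lia) hLk; have := mL L' ltac:(lia) hLk' => m1 m2.
  have E' : m * (n - j) + L.-1 = m * (n - j') + L'.-1 by lia.
  have [e1 e2] := divmod2 E' ltac:(lia) ltac:(lia); split; lia.
- move=> L j L' j' hL hj hL' hLk' hj'; rewrite /hvL /heL.
  have m2 := mL L' ltac:(lia) hLk'.
  have hb : L' + m * (n - j') <= m * n.+1 by apply: lowb; lia.
  case: ifP => h1 E.
  + have E' : m * j + L.-1 = m * (n - j') + L'.-1 by lia.
    have [e1 e2] := divmod2 E' ltac:(lia) ltac:(lia); lia.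
  + have := highb L j ltac:(lia); lia.
- move=> L1 L2 L3 j1 j2 h1 k1 h2 k2 h3 k3 hs hj hz.
  rewrite /hvL /heL.
  have := mL L1 ltac:(lia) k1; have := mL L3 ltac:(lia) k3 => m3 m1.
  rewrite m1 m3.
  have : m * j1 + m * (n - (j1 + j2)) + m * j2 = m * n by nia.
  lia.
Qed.

Lemma card_elt (V : finType) (adj : rel V) :
  #|{: (V + {A : {set V} | A \in edges adj})%type}| = NN adj.
Proof. by rewrite card_sum card_sig /NN; congr addn; apply: eq_card. Qed.

Lemma S_lab (V : finType) (n : nat) (adj h1 h2 : rel V) (X Y : {set V})
  (f : elt adj -> nat) k (hv he : nat -> nat -> nat) K :
  Hyp adj h1 h2 X Y -> edge_magic_labeling f k -> scheme (NN adj) k n hv he K ->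
  NN (S2n_adj (n:=n) adj h1 h2 X Y) = n.+1 * NN adj ->
  edge_magic_labeling (FS _ n adj h1 h2 X Y f hv he) K.
Proof.
move=> H hf hs cS.
have [fI fR fV] := FS_props H hf hs.
apply/labE; split => //.
- by move=> z; rewrite cS.
- apply: surj_from_card => //; first by move=> z; rewrite cS.
  by rewrite card_elt cS.
Qed.

Lemma block0_surj (V : finType) (n : nat) (adj h1 h2 : rel V) (X Y : {set V})
  (f : elt adj -> nat) k :
  Hyp adj h1 h2 X Y -> edge_magic_labeling f k ->
  forall t, 0 < t <= n.+1 * NN adj ->
  exists z, FS _ n adj h1 h2 X Y f (hvB n 0) (heB n 0) z = t.
Proof.
move=> H hf t ht.
have [fI fR fS fV] := (iffLR (labE f k)) hf.
set L := (t.-1 %/ n.+1).+1.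
set o := t.-1 %% n.+1.
have ho : o < n.+1 by rewrite /o ltn_pmod.
have hL : 0 < L <= NN adj.
  rewrite /L ltnS ltn_divLR //; rewrite mulnC; lia.
have ht' : t = n.+1 * L.-1 + o + 1.
  by rewrite /L /o /= mulnC -divn_eq; lia.
have [z0 hz0] := fS L hL.
have sg0 j : j < n.+1 -> sg n 0 j = j by move=> hj; rewrite /sg addn0 modn_small.
case: z0 hz0 => [v|[B hB]] hz0.
- exists (inl (cp n v o)); rewrite /FS pv_cp pc_cp; last by rewrite -ltnS.
  by rewrite hz0 /hvB sg0.
- have [x [y [hxy EB]]] := edgesP hB.
  have [a [b [hab ea eb ec]]] := Sedge_surj (n:=n) (j:=n - o) H hxy (leq_subr _ _).
  have hA := edge_in hab.
  exists (eE hA); rewrite /FS /eE /= pE2 ccE2 ?(adjS_neq' H hab) // ea eb ec -EB.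
  rewrite (fE_eE f hB) /eE hz0 /heB sg0; last lia.
  lia.
Qed.

Lemma mulS2 n i : 3 <= i -> n.+1 * (i - 2) = n.+1 * (i - 3) + n.+1.
Proof. move=> h; nia. Qed.

Theorem mainTheorem11 (V : finType) (adj : rel V) (X Y : {set V})
    (h1 h2 : rel V) (n : nat) :
  simple_graph adj ->
  0 < #|edges adj| ->
  edge_magic adj ->
  (* bipartite with stable sets X and Y *)
  [disjoint X & Y] -> X :|: Y = [set: V] ->
  (forall x y, adj x y -> (x \in X) && (y \in Y) || (x \in Y) && (y \in X)) ->
  (* G ≅ H1 ⊕ H2 : the edge sets of H1, H2 partition E(G) *)
  symmetric h1 -> symmetric h2 ->
  (forall x y, adj x y = h1 x y || h2 x y) ->
  (forall x y, ~~ (h1 x y && h2 x y)) ->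
  1 <= n ->
  (n.+1 * #|tau adj| + 2 <= #|tau (@S2n_adj V n adj h1 h2 X Y)|)%N.
Proof.
move=> [hsym hirr] hq hem hdis hcov hbip hs1 hs2 hdec hex hn.
have H : Hyp adj h1 h2 X Y by split.
pose P := fun k => asbool (exists f : elt adj -> nat, edge_magic_labeling f k).
have exP : exists k, P k.
  by case: hem => f [k hf]; exists k; apply/asboolP; exists f.
case: (ex_minnP exP) => kmin /asboolP [fmin hfmin] kmin_min.
have minP : forall k (f : elt adj -> nat), edge_magic_labeling f k -> kmin <= k.
  by move=> k f hf; apply: kmin_min; apply/asboolP; exists f.
have /andP [k6 kN] := val_bounds hirr hfmin hq.
have N0 : 0 < NN adj by lia.
have cS : NN (S2n_adj (n:=n) adj h1 h2 X Y) = n.+1 * NN adj.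
  have [fI fR _] := FS_props (n:=n) H hfmin
     (@block_scheme (NN adj) kmin n 0 (leq0n n) k6).
  rewrite -card_elt; apply: card_from_bij fI fR _.
  exact: block0_surj H hfmin.
have irrS : irreflexive (S2n_adj (n:=n) adj h1 h2 X Y).
  by move=> a; apply/negP => haa; have := adjS_neq' H haa; rewrite eqxx.
have qS : 0 < #|edges (S2n_adj (n:=n) adj h1 h2 X Y)|.
  move: hq; rewrite !card_gt0 => /set0Pn [A /edgesP [x [y [hxy _]]]].
  apply/set0Pn; exists [set inl x; inl y]; exact: edge_in.
have valS : forall (F : elt (S2n_adj (n:=n) adj h1 h2 X Y) -> nat) K,
    edge_magic_labeling F K -> K <= 3 * NN (S2n_adj (n:=n) adj h1 h2 X Y).
  by move=> F K hF; have /andP [] := val_bounds irrS hF qS.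
pose Bv k a := n.+1 * (k - 3) + 3 + n + a.
have tauG : forall i : 'I_(3 * (#|V| + #|edges adj|)).+1, i \in tau adj ->
    [/\ 6 <= i, kmin <= i, kmin <= 3 * (NN adj).+1 - i &
     forall a, a <= n -> exists F : elt (S2n_adj (n:=n) adj h1 h2 X Y) -> nat,
       edge_magic_labeling F (Bv i a)].
  move=> i /tau_lab [f hf].
  have /andP [i6 _] := val_bounds hirr hf hq.
  split => //; first exact: minP hf.
    exact: minP (lab_dual hf).
  move=> a ha; eexists; apply: S_lab H hf _ cS.
  exact: block_scheme.
set m := minn (kmin - 3) (NN adj).
set Vlow := kmin + m * n.
have hlow : edge_magic_labeling
    (FS _ n adj h1 h2 X Y fmin (hvL m n) (heL m n)) Vlow.
  exact: S_lab H hfmin (@low_scheme (NN adj) kmin n k6 N0) cS.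
have hhigh := lab_dual hlow.
set Vhigh := 3 * (NN (S2n_adj (n:=n) adj h1 h2 X Y)).+1 - Vlow in hhigh.
have lowle := valS _ _ hlow.
have highle := valS _ _ hhigh.
have mk : m <= kmin - 3 by rewrite /m geq_minl.
have mn : m * n <= (kmin - 3) * n by rewrite leq_mul2r mk orbT.
have lowlt : forall k a, kmin <= k -> Vlow < Bv k a.
  move=> k a hk; rewrite /Vlow /Bv.
  have : n.+1 * (kmin - 3) <= n.+1 * (k - 3) by rewrite leq_mul2l; lia.
  nia.
have highgt : forall k a, 6 <= k -> kmin <= 3 * (NN adj).+1 - k -> a <= n -> Bv k a < Vhigh.
  move=> k a k6' hk ha; rewrite /Vhigh cS /Vlow /Bv.
  have : n.+1 * (k - 3) <= n.+1 * (3 * NN adj - kmin) by rewrite leq_mul2l; lia.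
  nia.
pose g := fun p : 'I_(3 * (#|V| + #|edges adj|)).+1 * 'I_n.+1 =>
  (inord (Bv p.1 p.2) : 'I_(3 * (#|{: (V + V * 'I_n)%type}| + #|edges (S2n_adj (n:=n) adj h1 h2 X Y)|)).+1).
pose D := setX (tau adj) [set: 'I_n.+1].
have gval : forall p, p \in D -> nat_of_ord (g p) = Bv p.1 p.2 /\ g p \in tau (S2n_adj (n:=n) adj h1 h2 X Y).
  move=> [i a]; rewrite in_setX in_setT andbT => hi.
  have [i6 _ _ hF] := tauG i hi.
  have [F hFl] := hF a (ltn_ord a : a < n.+1).
  have hle := valS _ _ hFl.
  split; first by rewrite /g /= inordK // ltnS.
  exact: in_tau hFl hle.
have ginj : {in D &, injective g}.
  move=> [i a] [i' a'] hp hp' E.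
  have [v1 _] := gval _ hp; have [v2 _] := gval _ hp'.
  move: hp hp'; rewrite !in_setX !in_setT !andbT => hi hi'.
  have [i6 _ _ _] := tauG i hi; have [i6' _ _ _] := tauG i' hi'.
  have E2 : Bv i a = Bv i' a' by rewrite -v1 -v2 E.
  have e1 := mulS2 n (leq_trans (isT : 3 <= 6) i6).
  have e2 := mulS2 n (leq_trans (isT : 3 <= 6) i6').
  have E3 : n.+1 * (i - 2) + a = n.+1 * (i' - 2) + a' by rewrite /Bv in E2; lia.
  have [d1 d2] := divmod2 E3 (ltn_ord a) (ltn_ord a').
  by congr pair; apply: ord_inj; lia.
have lowI : (inord Vlow : 'I_(3 * (#|{: (V + V * 'I_n)%type}| + #|edges (S2n_adj (n:=n) adj h1 h2 X Y)|)).+1) \notin g @: D.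
  apply/imsetP => [[p hp E]].
  have [v _] := gval _ hp.
  move: hp; case: p E v => i a E v; rewrite in_setX in_setT andbT => hi.
  have [_ ki _ _] := tauG i hi.
  have := lowlt i a ki; rewrite -v -E inordK //; lia.
have highI : (inord Vhigh : 'I_(3 * (#|{: (V + V * 'I_n)%type}| + #|edges (S2n_adj (n:=n) adj h1 h2 X Y)|)).+1) \notin g @: D.
  apply/imsetP => [[p hp E]].
  have [v _] := gval _ hp.
  move: hp; case: p E v => i a E v; rewrite in_setX in_setT andbT => hi.
  have [i6 _ ki _] := tauG i hi.
  have := highgt i a i6 ki (ltn_ord a : a < n.+1); rewrite -v -E inordK //; lia.
have kd : kmin <= 3 * (NN adj).+1 - kmin by exact: minP (lab_dual hfmin).
have lhlt : Vlow < Vhigh.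
  have := lowlt kmin 0 (leqnn _); have := highgt kmin 0 k6 kd (leq0n _); lia.
have lh : (inord Vlow : 'I_(3 * (#|{: (V + V * 'I_n)%type}| + #|edges (S2n_adj (n:=n) adj h1 h2 X Y)|)).+1) \notin
     inord Vhigh |: g @: D.
  rewrite in_setU1 negb_or lowI andbT; apply/eqP => /(congr1 val).
  rewrite /= !inordK; [lia | exact: highle | exact: lowle].
have sub : inord Vlow |: (inord Vhigh |: g @: D) \subset tau (S2n_adj (n:=n) adj h1 h2 X Y).
  apply/subsetP => x; rewrite !in_setU1 => /orP [/eqP ->|/orP [/eqP ->|/imsetP [p hp ->]]].
  - exact: in_tau hlow lowle.
  - exact: in_tau hhigh highle.
  - by have [_ ] := gval _ hp.
have := subset_leq_card sub.
rewrite cardsU1 lh cardsU1 highI (card_in_imset ginj) cardsX cardsT card_ord.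
rewrite mulnC addnC; apply: leq_trans; rewrite /= addn1 add1n.
by rewrite addn2.
Qed.
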